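(* Let $X$ be a Hausdorff space with base point $*$ and $\tilde C$ a locally trivial numerable $X$-pregroupoid. Then there exists a unique Hausdorff locally trivial numerable $X$-groupoid $C$ together with a continuous surjective morphism $\tilde C\to C$ satisfying: every representation of $\tilde C$ on a principal $G$-bundle $\xi$ over $X$, with $G$ a Hausdorff topological group, is induced by a unique representation of $C$ on $\xi$.
   Context: An $X$-pregroupoid is a space $\tilde C$ with continuous $\alpha,\beta:\tilde C\to X$, a continuous associative partial composition on $\{(c_1,c_2):\alpha(c_1)=\beta(c_2)\}$ with $\alpha(c_1c_2)=\alpha(c_2)$, $\beta(c_1c_2)=\beta(c_1)$, continuous units $x\mapsto i_x$ neutral on both sides, and a continuous anti-involution $c\mapsto\bar c$ sending $\tilde C_x^y$ to $\tilde C_y^x$ (no inverse condition); $\tilde C_x=\alpha^{-1}(x)$, $\tilde C^y=\beta^{-1}(y)$. An $X$-groupoid is the same with an inversion $c\mapsto c^{-1}$ satisfying $cc^{-1}$, $c^{-1}c$ units. Locally trivial numerable: the domains of contractions (continuous $\rho:U_\rho\to\tilde C^*$, $U_\rho$ open, $\alpha\rho(x)=x$) cover $X$ with a subordinate partition of unity. A morphism $\tilde C\to C$ is a map over $\mathrm{id}_X$ compatible with $\alpha,\beta$, composition, units, and sending $\bar c$ to the inverse. A representation of $\tilde C$ on a principal $G$-bundle $\xi=(E\xrightarrow{p}X)$ is a continuous $w:\tilde C\times_XE\to E$ with $p(w(c,z))=\beta(c)$, $w(cd,z)=w(c,w(d,z))$, $w(\bar c,w(c,z))=z$, $w(c,zg)=w(c,z)g$;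 for groupoids the third axiom reads $w(c^{-1},w(c,z))=z$. A representation $w$ of $C$ induces the representation $(c,z)\mapsto w(\pi(c),z)$ of $\tilde C$, $\pi:\tilde C\to C$ the morphism. *)

(* Defs.v *)
From HB Require Import structures.
From mathcomp Require Import all_boot all_order all_algebra.
From mathcomp Require Import all_classical all_reals all_analysis.
From mathcomp Require Import Rstruct Rstruct_topology.
From Stdlib Require Import Reals.
Set Implicit Arguments. Unset Strict Implicit. Unset Printing Implicit Defensive.
Import Order.TTheory GRing.Theory Num.Theory.
Local Open Scope classical_set_scope.
Local Open Scope ring_scope.

(* Data of an X-pregroupoid on the space C:
   src = alpha, tgt = beta, cmp c1 c2 = c1 c2 (defined when src c1 = tgt c2),
   unt x = i_x, bar c = anti-involution. *)
Record pgdata (X C : Type) := PGData {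
  src : C -> X; tgt : C -> X; cmp : C -> C -> C; unt : X -> C; bar : C -> C }.

Definition is_pregroupoid (X C : topologicalType) (D : pgdata X C) : Prop :=
  [/\ continuous (src D), continuous (tgt D),
      {within [set p : C * C | src D p.1 = tgt D p.2],
         continuous (fun p => cmp D p.1 p.2)},
      continuous (unt D) & continuous (bar D)] /\
  [/\ (forall c1 c2, src D c1 = tgt D c2 ->
         src D (cmp D c1 c2) = src D c2 /\ tgt D (cmp D c1 c2) = tgt D c1),
      (forall c1 c2 c3, src D c1 = tgt D c2 -> src D c2 = tgt D c3 ->
         cmp D (cmp D c1 c2) c3 = cmp D c1 (cmp D c2 c3)),
      (forall x, src D (unt D x) = x /\ tgt D (unt D x) = x),
      (forall c, cmp D (unt D (tgt D c)) c = c /\ cmp D c (unt D (src D c)) = c) &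
      [/\ (forall c, bar D (bar D c) = c),
          (forall c, src D (bar D c) = tgt D c /\ tgt D (bar D c) = src D c) &
          (forall c1 c2, src D c1 = tgt D c2 ->
             bar D (cmp D c1 c2) = cmp D (bar D c2) (bar D c1))]].

Definition is_groupoid (X C : topologicalType) (D : pgdata X C) : Prop :=
  is_pregroupoid D /\
  forall c, cmp D c (bar D c) = unt D (tgt D c) /\ cmp D (bar D c) c = unt D (src D c).

Definition numerable_subordinate (X : topologicalType) (P : set X -> Prop) : Prop :=
  exists (J : choiceType) (phi : J -> X -> R),
    [/\ (forall j, continuous (phi j)),
        (forall j x, 0 <= phi j x <= 1),
        (forall x : X, exists2 N : set X, nbhs x N &
            finite_set [set j | exists2 y, N y & phi j y != 0]),
        (forall x, (\sum_(j \in [set j | phi j x != 0]) phi j x)%R = 1) &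
        (forall j, exists2 U, P U & closure [set x | phi j x != 0] `<=` U)].

Definition contraction_domain (X C : topologicalType) (x0 : X) (D : pgdata X C)
  (U : set X) : Prop :=
  open U /\ exists rho : X -> C,
    {within U, continuous rho} /\
    forall x, U x -> src D (rho x) = x /\ tgt D (rho x) = x0.

Definition locally_trivial_numerable (X C : topologicalType) (x0 : X)
  (D : pgdata X C) : Prop :=
  numerable_subordinate (contraction_domain x0 D).

Definition is_morphism (X C1 C2 : Type) (D1 : pgdata X C1) (D2 : pgdata X C2)
  (f : C1 -> C2) : Prop :=
  [/\ (forall c, src D2 (f c) = src D1 c /\ tgt D2 (f c) = tgt D1 c),
      (forall c d, src D1 c = tgt D1 d -> f (cmp D1 c d) = cmp D2 (f c) (f d)),
      (forall x, f (unt D1 x) = unt D2 x) &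
      (forall c, f (bar D1 c) = bar D2 (f c))].

Definition is_topgroup (G : topologicalType) (mul : G -> G -> G) (one : G)
  (inv : G -> G) : Prop :=
  [/\ (forall a b c, mul a (mul b c) = mul (mul a b) c),
      (forall a, mul one a = a /\ mul a one = a),
      (forall a, mul (inv a) a = one /\ mul a (inv a) = one),
      continuous (fun ab : G * G => mul ab.1 ab.2) & continuous inv].

Definition principal_bundle (X E G : topologicalType) (mul : G -> G -> G)
  (one : G) (p : E -> X) (act : E -> G -> E) : Prop :=
  [/\ continuous p /\ continuous (fun zg : E * G => act zg.1 zg.2),
      (forall z, act z one = z) /\ (forall z g h, act (act z g) h = act z (mul g h)),
      (forall z g, p (act z g) = p z),
      (forall z z', p z = p z' -> exists! g, act z g = z') /\
      (exists tau : E -> E -> G,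
         {within [set zz : E * E | p zz.1 = p zz.2],
            continuous (fun zz => tau zz.1 zz.2)} /\
         forall z z', p z = p z' -> act z (tau z z') = z') &
      (forall x, exists U, [/\ open U, U x &
         exists s : X -> E, {within U, continuous s} /\
           forall y, U y -> p (s y) = y])].

Definition is_representation (X C E G : topologicalType) (D : pgdata X C)
  (p : E -> X) (act : E -> G -> E) (w : C -> E -> E) : Prop :=
  [/\ {within [set cz : C * E | src D cz.1 = p cz.2],
         continuous (fun cz => w cz.1 cz.2)},
      (forall c z, src D c = p z -> p (w c z) = tgt D c),
      (forall c d z, src D c = tgt D d -> src D d = p z ->
          w (cmp D c d) z = w c (w d z)),
      (forall c z, src D c = p z -> w (bar D c) (w c z) = z) &
      (forall c z g, src D c = p z -> w c (act z g) = act (w c z) g)].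

Definition induced_by (X Ct C E : Type) (Dt : pgdata X Ct) (p : E -> X)
  (f : Ct -> C) (w : C -> E -> E) (wt : Ct -> E -> E) : Prop :=
  forall c z, src Dt c = p z -> wt c z = w (f c) z.

Definition reps_factor (X Ct C : topologicalType) (Dt : pgdata X Ct)
  (D : pgdata X C) (f : Ct -> C) : Prop :=
  forall (G : topologicalType) (mul : G -> G -> G) (one : G) (inv : G -> G),
    hausdorff_space G -> is_topgroup mul one inv ->
  forall (E : topologicalType) (p : E -> X) (act : E -> G -> E),
    principal_bundle mul one p act ->
  forall wt : Ct -> E -> E, is_representation Dt p act wt ->
    exists w : C -> E -> E,
      [/\ is_representation D p act w, induced_by Dt p f w wt &
          forall w', is_representation D p act w' -> induced_by Dt p f w' wt ->
            forall c z, src D c = p z -> w' c z = w c z].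

Definition good_quotient (X Ct C : topologicalType) (x0 : X) (Dt : pgdata X Ct)
  (D : pgdata X C) (f : Ct -> C) : Prop :=
  [/\ hausdorff_space C /\ is_groupoid D, locally_trivial_numerable x0 D,
      continuous f /\ (forall y, exists c, f c = y),
      is_morphism Dt D f & reps_factor Dt D f].

(* Main.v *)
Require Import Defs.
From HB Require Import structures.
From mathcomp Require Import all_boot all_order all_algebra.
From mathcomp Require Import all_classical all_reals all_analysis.
From mathcomp Require Import Rstruct Rstruct_topology.
Set Implicit Arguments. Unset Strict Implicit. Unset Printing Implicit Defensive.
Local Open Scope classical_set_scope.

Definition cw {T S : topologicalType} (A : set T) (f : T -> S) :=
  forall x, A x -> forall V, open V -> V (f x) ->
    exists U, [/\ open U, U x & forall y, U y -> A y -> V (f y)].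

Lemma cwP {T S : topologicalType} (A : set T) (f : T -> S) :
  cw A f <-> {within A, continuous f}.
Proof.
rewrite continuousP; split=> [cf V oV|cf x Ax V oV Vfx].
  apply/open_subspaceP.
  exists (\bigcup_(U in [set U | open U /\ forall y, U y -> A y -> V (f y)]) U).
    by apply: bigcup_open => U [].
  rewrite eqEsubset; split=> y [].
    by move=> [U [_ UV] Uy] Ay; split=> //; exact: UV.
  move=> Vfy Ay; split=> //.
  have [U [oU Uy UV]] := cf y Ay V oV Vfy.
  by exists U.
have /open_subspaceP [U oU UE] := cf V oV.
exists U; split=> //.
  by have : (f @^-1` V `&` A) x by [] ; rewrite -UE => -[].
move=> y Uy Ay.
by have : (U `&` A) y by [] ; rewrite UE => -[].
Qed.

Lemma cw_cts {T S : topologicalType} (A : set T) (f : T -> S) :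
  continuous f -> cw A f.
Proof.
move=> /continuousP cf x Ax V oV Vfx; exists (f @^-1` V); split=> //.
exact: cf.
Qed.

Lemma cw_setT {T S : topologicalType} (f : T -> S) : cw setT f -> continuous f.
Proof. by move=> /cwP H; apply/continuous_subspace_setT. Qed.

Lemma cw_comp {T S R : topologicalType} (A : set T) (B : set S) (f : T -> S)
  (g : S -> R) : cw A f -> cw B g -> (forall x, A x -> B (f x)) ->
  cw A (fun x => g (f x)).
Proof.
move=> cf cg AB x Ax V oV Vgfx.
have [U' [oU' U'fx U'V]] := cg (f x) (AB x Ax) V oV Vgfx.
have [U [oU Ux UU']] := cf x Ax U' oU' U'fx.
exists U; split=> // y Uy Ay; apply: U'V; [exact: UU'|exact: AB].
Qed.

Lemma cw_sub {T S : topologicalType} (A B : set T) (f : T -> S) :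
  B `<=` A -> cw A f -> cw B f.
Proof.
move=> BA cf x Bx V oV Vfx; have [U [oU Ux UV]] := cf x (BA x Bx) V oV Vfx.
by exists U; split=> // y Uy By; apply: UV => //; apply: BA.
Qed.

Lemma cw_ext {T S : topologicalType} (A : set T) (f g : T -> S) :
  (forall x, A x -> f x = g x) -> cw A f -> cw A g.
Proof.
move=> fg cf x Ax V oV; rewrite -fg // => Vfx.
have [U [oU Ux UV]] := cf x Ax V oV Vfx.
by exists U; split=> // y Uy Ay; rewrite -fg //; apply: UV.
Qed.

Lemma cw_local {T S : topologicalType} (A : set T) (f : T -> S) :
  (forall x, A x -> exists U, [/\ open U, U x & cw (A `&` U) f]) -> cw A f.
Proof.
move=> H x Ax V oV Vfx; have [U0 [oU0 U0x cf]] := H x Ax.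
have [U1 [oU1 U1x UV]] := cf x (conj Ax U0x) V oV Vfx.
exists (U0 `&` U1); split=> //; first exact: openI.
by move=> y [U0y U1y] Ay; apply: UV.
Qed.

Lemma cw_const {T S : topologicalType} (A : set T) (c : S) : cw A (fun _ => c).
Proof. by move=> x Ax V oV Vc; exists setT; split=> //; exact: openT. Qed.

Lemma cw_id {T : topologicalType} (A : set T) : cw A id.
Proof. by move=> x Ax V oV Vx; exists V. Qed.

Lemma open_prod_nbhs {S1 S2 : topologicalType} (V : set (S1 * S2)) a b :
  open V -> V (a, b) ->
  exists V1 V2, [/\ open V1, open V2, V1 a, V2 b & V1 `*` V2 `<=` V].
Proof.
move=> oV Vab.
have : nbhs (a, b) V by apply: open_nbhs_nbhs.
case=> -[P1 P2] /= [n1 n2] sP.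
move: n1 n2; rewrite !nbhsE => -[B1 [oB1 B1a] s1] [B2 [oB2 B2b] s2].
exists B1, B2; split=> // -[y1 y2] [/= /s1 ? /s2 ?]; exact: sP.
Qed.

Lemma openX {S1 S2 : topologicalType} (V1 : set S1) (V2 : set S2) :
  open V1 -> open V2 -> open (V1 `*` V2).
Proof.
move=> o1 o2; rewrite openE => -[a b] [/= V1a V2b].
exists (V1, V2); first by split; apply: open_nbhs_nbhs.
by [].
Qed.

Lemma cw_pair {T S1 S2 : topologicalType} (A : set T) (f : T -> S1)
  (g : T -> S2) : cw A f -> cw A g -> cw A (fun x => (f x, g x)).
Proof.
move=> cf cg x Ax V oV Vx.
have [V1 [V2 [oA oB V1f V2g sV]]] := open_prod_nbhs oV Vx.
have [U1 [oU1 U1x H1]] := cf x Ax V1 oA V1f.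
have [U2 [oU2 U2x H2]] := cg x Ax V2 oB V2g.
exists (U1 `&` U2); split=> //; first exact: openI.
by move=> y [U1y U2y] Ay; apply: sV; split; [apply: H1|apply: H2].
Qed.

Lemma cw_fst {S1 S2 : topologicalType} (A : set (S1 * S2)) : cw A fst.
Proof.
move=> x Ax V oV Vx; exists (V `*` setT); split=> //.
by apply: openX => //; exact: openT.
by move=> y [].
Qed.

Lemma cw_snd {S1 S2 : topologicalType} (A : set (S1 * S2)) : cw A snd.
Proof.
move=> x Ax V oV Vx; exists (setT `*` V); split=> //.
by apply: openX => //; exact: openT.
by move=> y [].
Qed.

Lemma cw_open_restrict {T S : topologicalType} (A U : set T) (f : T -> S) :
  open U -> cw (A `&` U) f -> forall x, A x -> U x -> forall V, open V -> V (f x) ->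
  exists W, [/\ open W, W x & forall y, W y -> A y -> V (f y)].
Proof.
move=> oU cf x Ax Ux V oV Vfx; have [W [oW Wx WV]] := cf x (conj Ax Ux) V oV Vfx.
exists (W `&` U); split=> //; first exact: openI.
by move=> y [Wy Uy] Ay; apply: WV.
Qed.

Lemma hausdorffP {T : topologicalType} : hausdorff_space T ->
  forall x y : T, x <> y -> exists U V, [/\ open U, open V, U x, V y &
     forall z, U z -> V z -> False].
Proof.
rewrite open_hausdorff => H x y /eqP /H [[U V] [/= xU yV] [oU oV /eqP UV]].
move: xU yV; rewrite !in_setE => xU yV.
exists U, V; split=> //.
by move=> z Uz Vz; have : (U `&` V) z by []; rewrite UV.
Qed.

Lemma hausdorffI {T : topologicalType} :
  (forall x y : T, x <> y -> exists U V, [/\ open U, open V, U x, V y &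
     forall z, U z -> V z -> False]) -> hausdorff_space T.
Proof.
move=> H; rewrite open_hausdorff => x y /eqP /H [U [V [oU oV Ux Vy UV]]].
exists (U, V); first by split; rewrite in_setE.
split=> //; apply/eqP; rewrite -subset0 => z [] /=; exact: UV.
Qed.

Lemma rep_unt (X C E G : topologicalType) (D : pgdata X C) (p : E -> X)
  (act : E -> G -> E) w :
  is_pregroupoid D -> is_representation D p act w ->
  forall z, w (unt D (p z)) z = z.
Proof.
case=> _ [sC aC sU uC [bb sB bC]] [wC wP wM wB wE] z.
set u := unt D (p z).
have [su tu] := sU (p z).
have uu : cmp D u u = u by have [+ _] := uC u; rewrite tu.
have e1 : w u z = w u (w u z) by rewrite -{1}uu wM // tu.
have e2 : w (bar D u) (w u z) = z by apply: wB.
have e3 : w (bar D u) (w u (w u z)) = w u z by apply: wB; rewrite wP // su tu.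
by rewrite -e1 e2 in e3.
Qed.

Lemma rep_barK (X C E G : topologicalType) (D : pgdata X C) (p : E -> X)
  (act : E -> G -> E) w :
  is_pregroupoid D -> is_representation D p act w ->
  forall c z, p z = tgt D c -> w c (w (bar D c) z) = z.
Proof.
case=> _ [sC aC sU uC [bb sB bC]] [wC wP wM wB wE] c z pz.
by rewrite -{1}(bb c); apply: wB; rewrite (proj1 (sB c)).
Qed.

Definition isrep (X Ct : topologicalType) (Dt : pgdata X Ct) (G : topologicalType)
  (mul : G -> G -> G) (one : G) (inv : G -> G) (E : topologicalType)
  (p : E -> X) (act : E -> G -> E) (wt : Ct -> E -> E) :=
  [/\ hausdorff_space G, is_topgroup mul one inv, principal_bundle mul one p act
    & is_representation Dt p act wt].

Definition qrel (X Ct : topologicalType) (Dt : pgdata X Ct) (c d : Ct) :=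
  [/\ src Dt c = src Dt d, tgt Dt c = tgt Dt d &
  forall (G : topologicalType) (mul : G -> G -> G) (one : G) (inv : G -> G)
    (E : topologicalType) (p : E -> X) (act : E -> G -> E) (wt : Ct -> E -> E),
    isrep Dt mul one inv p act wt -> forall z, p z = src Dt c -> wt c z = wt d z].

Definition Qt (X Ct : topologicalType) (Dt : pgdata X Ct) :=
  {A : set Ct | exists c, A = qrel Dt c}.

HB.instance Definition _ (X Ct : topologicalType) (Dt : pgdata X Ct) :=
  gen_eqMixin (Qt Dt).
HB.instance Definition _ (X Ct : topologicalType) (Dt : pgdata X Ct) :=
  gen_choiceMixin (Qt Dt).

Definition qq (X Ct : topologicalType) (Dt : pgdata X Ct) (c : Ct) : Qt Dt :=
  exist _ (qrel Dt c) (ex_intro _ c erefl).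

Definition qrep (X Ct : topologicalType) (Dt : pgdata X Ct) (y : Qt Dt) : Ct :=
  projT1 (cid (proj2_sig y)).

Lemma qrel_refl (X Ct : topologicalType) (Dt : pgdata X Ct) c : qrel Dt c c.
Proof. by split. Qed.

Lemma qrel_sym (X Ct : topologicalType) (Dt : pgdata X Ct) c d :
  qrel Dt c d -> qrel Dt d c.
Proof.
case=> s t H; split=> // G mul one inv E p act wt R z pz.
by rewrite (H _ _ _ _ _ _ _ _ R) // pz.
Qed.

Lemma qrel_trans (X Ct : topologicalType) (Dt : pgdata X Ct) c d e :
  qrel Dt c d -> qrel Dt d e -> qrel Dt c e.
Proof.
case=> s t H [s' t' H']; split; [by rewrite s|by rewrite t|].
move=> G mul one inv E p act wt R z pz.
by rewrite (H _ _ _ _ _ _ _ _ R) // (H' _ _ _ _ _ _ _ _ R) // -s.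
Qed.

Lemma qqK (X Ct : topologicalType) (Dt : pgdata X Ct) (y : Qt Dt) :
  qq Dt (qrep y) = y.
Proof.
rewrite /qrep; case: cid => c /= e.
case: y e => A HA /= e; subst A; rewrite /qq; congr exist.
exact: Prop_irrelevance.
Qed.

Lemma exist_eq (T : Type) (P : T -> Prop) (a b : T) (pa : P a) (pb : P b) :
  a = b -> exist P a pa = exist P b pb.
Proof. by move=> e; subst b; congr exist; exact: Prop_irrelevance. Qed.

Lemma qq_eq (X Ct : topologicalType) (Dt : pgdata X Ct) c d :
  qrel Dt c d -> qq Dt c = qq Dt d.
Proof.
move=> r; rewrite /qq.
have e : qrel Dt c = qrel Dt d.
  rewrite funeqE => e; apply: propext; split.
    by apply: qrel_trans; apply: qrel_sym.
  exact: qrel_trans.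
exact: exist_eq.
Qed.

Lemma qq_eqP (X Ct : topologicalType) (Dt : pgdata X Ct) c d :
  qq Dt c = qq Dt d -> qrel Dt c d.
Proof.
move=> /(congr1 (@proj1_sig _ _)) /= e.
by rewrite e; apply: qrel_refl.
Qed.

Lemma qrepq (X Ct : topologicalType) (Dt : pgdata X Ct) c :
  qrel Dt (qrep (qq Dt c)) c.
Proof. by apply: qq_eqP; rewrite qqK. Qed.

Definition Dq (X Ct : topologicalType) (Dt : pgdata X Ct) : pgdata X (Qt Dt) :=
  PGData (fun y => src Dt (qrep y)) (fun y => tgt Dt (qrep y))
    (fun y1 y2 => qq Dt (cmp Dt (qrep y1) (qrep y2)))
    (fun x => qq Dt (unt Dt x)) (fun y => qq Dt (bar Dt (qrep y))).

Lemma src_qq (X Ct : topologicalType) (Dt : pgdata X Ct) c :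
  src (Dq Dt) (qq Dt c) = src Dt c.
Proof. by have [] := qrepq Dt c. Qed.

Lemma tgt_qq (X Ct : topologicalType) (Dt : pgdata X Ct) c :
  tgt (Dq Dt) (qq Dt c) = tgt Dt c.
Proof. by have [] := qrepq Dt c. Qed.

Lemma qrel_cmp (X Ct : topologicalType) (Dt : pgdata X Ct) c c' d d' :
  is_pregroupoid Dt -> qrel Dt c c' -> qrel Dt d d' -> src Dt c = tgt Dt d ->
  qrel Dt (cmp Dt c d) (cmp Dt c' d').
Proof.
move=> hD [sc tc Hc] [sd td Hd] e.
case: (hD) => _ [sC aC sU uC [bb sB bC]].
have e' : src Dt c' = tgt Dt d' by rewrite -sc -td.
have [s1 t1] := sC _ _ e; have [s2 t2] := sC _ _ e'.
split; [by rewrite s1 s2|by rewrite t1 t2|].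
move=> G mul one inv E p act wt R z pz.
have R' := R; case: R' => _ _ _ [wC wP wM wB wE].
rewrite s1 in pz.
rewrite wM // wM //; last by rewrite -sd.
rewrite (Hd _ _ _ _ _ _ _ _ R) //.
rewrite (Hc _ _ _ _ _ _ _ _ R) //.
by rewrite wP -?sd // -td.
Qed.

Lemma qrel_bar (X Ct : topologicalType) (Dt : pgdata X Ct) c c' :
  is_pregroupoid Dt -> qrel Dt c c' -> qrel Dt (bar Dt c) (bar Dt c').
Proof.
move=> hD [sc tc Hc].
case: (hD) => _ [sC aC sU uC [bb sB bC]].
have [s1 t1] := sB c; have [s2 t2] := sB c'.
split; [by rewrite s1 s2|by rewrite t1 t2|].
move=> G mul one inv E p act wt R z pz.
have R' := R; case: R' => _ _ _ [wC wP wM wB wE].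
rewrite s1 in pz.
set z' := wt (bar Dt c) z.
have pz' : p z' = src Dt c by rewrite wP ?s1 // t1.
have hR : is_representation Dt p act wt by case: R.
have ez : wt c z' = z by exact: (rep_barK hD hR).
rewrite -{1}ez (Hc _ _ _ _ _ _ _ _ R) //.
by rewrite wB // -sc.
Qed.

Lemma cmp_qq (X Ct : topologicalType) (Dt : pgdata X Ct) c d :
  is_pregroupoid Dt -> src Dt c = tgt Dt d ->
  cmp (Dq Dt) (qq Dt c) (qq Dt d) = qq Dt (cmp Dt c d).
Proof.
move=> hD e; apply: qq_eq; apply: qrel_cmp => //; try exact: qrepq.
by have [-> _ _] := qrepq Dt c; have [_ -> _] := qrepq Dt d.
Qed.

Lemma bar_qq (X Ct : topologicalType) (Dt : pgdata X Ct) c :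
  is_pregroupoid Dt -> bar (Dq Dt) (qq Dt c) = qq Dt (bar Dt c).
Proof. by move=> hD; apply: qq_eq; apply: qrel_bar => //; exact: qrepq. Qed.

Lemma qrel_inv (X Ct : topologicalType) (Dt : pgdata X Ct) c :
  is_pregroupoid Dt ->
  qrel Dt (cmp Dt c (bar Dt c)) (unt Dt (tgt Dt c)) /\
  qrel Dt (cmp Dt (bar Dt c) c) (unt Dt (src Dt c)).
Proof.
move=> hD; case: (hD) => _ [sC aC sU uC [bb sB bC]].
have [s1 t1] := sB c.
have e1 : src Dt c = tgt Dt (bar Dt c) by rewrite t1.
have e2 : src Dt (bar Dt c) = tgt Dt c by rewrite s1.
have [s2 t2] := sC _ _ e1; have [s3 t3] := sC _ _ e2.
have [su1 tu1] := sU (tgt Dt c); have [su2 tu2] := sU (src Dt c).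
split; split.
- by rewrite s2 su1 s1.
- by rewrite t2 tu1.
- move=> G mul one inv E p act wt R z pz.
  have hR : is_representation Dt p act wt by case: R.
  have [wC wP wM wB wE] := hR.
  rewrite s2 s1 in pz.
  rewrite wM //; last by rewrite s1.
  by rewrite (rep_barK hD hR) // -pz (rep_unt hD hR).
- by rewrite s3 su2.
- by rewrite t3 tu2 t1.
- move=> G mul one inv E p act wt R z pz.
  have hR : is_representation Dt p act wt by case: R.
  have [wC wP wM wB wE] := hR.
  rewrite s3 in pz.
  rewrite wM // wB // -pz.
  by rewrite (rep_unt hD hR).
Qed.

Lemma Dq_alg (X Ct : topologicalType) (Dt : pgdata X Ct) : is_pregroupoid Dt ->
  let D := Dq Dt in
  [/\ (forall c1 c2, src D c1 = tgt D c2 ->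
         src D (cmp D c1 c2) = src D c2 /\ tgt D (cmp D c1 c2) = tgt D c1),
      (forall c1 c2 c3, src D c1 = tgt D c2 -> src D c2 = tgt D c3 ->
         cmp D (cmp D c1 c2) c3 = cmp D c1 (cmp D c2 c3)),
      (forall x, src D (unt D x) = x /\ tgt D (unt D x) = x),
      (forall c, cmp D (unt D (tgt D c)) c = c /\ cmp D c (unt D (src D c)) = c) &
      [/\ (forall c, bar D (bar D c) = c),
          (forall c, src D (bar D c) = tgt D c /\ tgt D (bar D c) = src D c) &
          (forall c1 c2, src D c1 = tgt D c2 ->
             bar D (cmp D c1 c2) = cmp D (bar D c2) (bar D c1))]] /\
  (forall c, cmp D c (bar D c) = unt D (tgt D c) /\ cmp D (bar D c) c = unt D (src D c)).
Proof.
move=> hD D; have hD' := hD; case: hD' => _ [sC aC sU uC [bb sB bC]].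
have Hs := src_qq Dt; have Ht := tgt_qq Dt.
have Hc := fun c d => @cmp_qq _ _ Dt c d hD; have Hb := fun c => @bar_qq _ _ Dt c hD.
split; first split.
- move=> y1 y2; rewrite -(qqK y1) -(qqK y2); move: (qrep y1) (qrep y2) => c1 c2.
  rewrite /D Hs Ht => e; rewrite Hc // !Hs !Ht; exact: sC.
- move=> y1 y2 y3; rewrite -(qqK y1) -(qqK y2) -(qqK y3).
  move: (qrep y1) (qrep y2) (qrep y3) => c1 c2 c3.
  rewrite /D !Hs !Ht => e1 e2.
  have [s12 t12] := sC _ _ e1; have [s23 t23] := sC _ _ e2.
  rewrite (Hc c1 c2) // (Hc c2 c3) // (Hc _ c3) ?s12 // (Hc c1) ?t23 // aC //.
- move=> x; rewrite /D.
  change (src (Dq Dt) (qq Dt (unt Dt x)) = x /\ tgt (Dq Dt) (qq Dt (unt Dt x)) = x).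
  rewrite Hs Ht; exact: sU.
- move=> y; rewrite -(qqK y); move: (qrep y) => c; rewrite /D Hs Ht.
  change ((cmp (Dq Dt) (qq Dt (unt Dt (tgt Dt c))) (qq Dt c) = qq Dt c) /\
     (cmp (Dq Dt) (qq Dt c) (qq Dt (unt Dt (src Dt c))) = qq Dt c)).
  have [su1 tu1] := sU (tgt Dt c); have [su2 tu2] := sU (src Dt c).
  rewrite !Hc // ?su1 ?tu2 //; have [-> ->] := uC c; done.
split.
- move=> y; rewrite -(qqK y); move: (qrep y) => c; rewrite /D !Hb bb //.
- move=> y; rewrite -(qqK y); move: (qrep y) => c; rewrite /D Hb !Hs !Ht.
  exact: sB.
- move=> y1 y2; rewrite -(qqK y1) -(qqK y2); move: (qrep y1) (qrep y2) => c1 c2.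
  rewrite /D Hs Ht => e; rewrite Hc // !Hb Hc ?bC //.
  by rewrite (proj1 (sB c2)) (proj2 (sB c1)).
move=> y; rewrite -(qqK y); move: (qrep y) => c; rewrite /D Hb Hs Ht.
change ((cmp (Dq Dt) (qq Dt c) (qq Dt (bar Dt c)) = qq Dt (unt Dt (tgt Dt c))) /\
     (cmp (Dq Dt) (qq Dt (bar Dt c)) (qq Dt c) = qq Dt (unt Dt (src Dt c)))).
have [i1 i2] := @qrel_inv _ _ Dt c hD.
rewrite !Hc ?(proj1 (sB c)) ?(proj2 (sB c)) //.
by split; apply: qq_eq.
Qed.

Definition psi (X Ct : topologicalType) (Dt : pgdata X Ct) (E : Type)
  (wt : Ct -> E -> E) (s : X -> E) (y : Qt Dt) : E :=
  wt (qrep y) (s (src Dt (qrep y))).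

Definition subb (X Ct : topologicalType) (Dt : pgdata X Ct) : set (set (Qt Dt)) :=
  fun B =>
  (exists2 O : set X, open O & B = (fun y => src Dt (qrep y)) @^-1` O) \/
  (exists2 O : set X, open O & B = (fun y => tgt Dt (qrep y)) @^-1` O) \/
  (exists (G : topologicalType) (mul : G -> G -> G) (one : G) (inv : G -> G)
     (E : topologicalType) (p : E -> X) (act : E -> G -> E) (wt : Ct -> E -> E)
     (U : set X) (s : X -> E) (O : set E),
     [/\ isrep Dt mul one inv p act wt, open U, cw U s,
         (forall x, U x -> p (s x) = x) &
        open O /\ B = [set y | U (src Dt (qrep y)) /\ O (psi wt s y)]]).

Arguments subb {X Ct} Dt _.

Definition Qopen (X Ct : topologicalType) (Dt : pgdata X Ct) (A : set (Qt Dt)) :=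
  forall F : set (set (Qt Dt)), F setT ->
    (forall A B, F A -> F B -> F (A `&` B)) ->
    (forall AA : set (set (Qt Dt)), AA `<=` F -> F (\bigcup_(B in AA) B)) ->
    subb Dt `<=` F -> F A.

Arguments Qopen {X Ct} Dt A.

Lemma QopT (X Ct : topologicalType) (Dt : pgdata X Ct) : Qopen Dt setT.
Proof. by rewrite /Qopen => F FT. Qed.

Lemma QopI (X Ct : topologicalType) (Dt : pgdata X Ct) : setI_closed (Qopen Dt).
Proof.
move=> A B oA oB; rewrite /Qopen => F FT FI FU FS; exact: (FI _ _ (oA F FT FI FU FS) (oB F FT FI FU FS)).
Qed.

Lemma Qop_bigU (X Ct : topologicalType) (Dt : pgdata X Ct) (I : Type)
  (f : I -> set (Qt Dt)) : (forall i, Qopen Dt (f i)) -> Qopen Dt (\bigcup_i f i).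
Proof.
move=> Hf; rewrite /Qopen => F FT FI FU FS.
have -> : \bigcup_i f i = \bigcup_(B in range f) B.
  rewrite eqEsubset; split=> y.
    by case=> i _ fiy; exists (f i) => //; exists i.
  by case=> B [i _ <-] fiy; exists i.
by apply: (FU) => B [i _ <-]; exact: (Hf i F FT FI FU FS).
Qed.

HB.instance Definition _ (X Ct : topologicalType) (Dt : pgdata X Ct) :=
  isOpenTopological.Build (Qt Dt) (@QopT X Ct Dt) (@QopI X Ct Dt) (@Qop_bigU X Ct Dt).

Lemma subb_open (X Ct : topologicalType) (Dt : pgdata X Ct) (B : set (Qt Dt)) :
  subb Dt B -> open B.
Proof. by move=> sB; rewrite /open /= /Qopen => F FT FI FU FS; apply: FS. Qed.

Lemma Qcont_crit (X Ct : topologicalType) (Dt : pgdata X Ct) (Y : topologicalType)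
  (g : Y -> Qt Dt) : (forall B, subb Dt B -> open (g @^-1` B)) -> continuous g.
Proof.
move=> H; apply/continuousP => A oA.
apply: (oA (fun B => open (g @^-1` B))) => //.
- exact: openT.
- by move=> B1 B2 o1 o2; apply: openI.
- move=> AA sAA; have -> : g @^-1` (\bigcup_(B in AA) B) =
    \bigcup_(B in AA) (g @^-1` B) by [].
  by apply: bigcup_open => B /sAA.
Qed.

Lemma pre_open_sub {T S : topologicalType} (A : set T) (g : T -> S) (B : set S) :
  (forall x, A x -> B (g x) -> exists U, [/\ open U, U x & forall y, U y -> A y -> B (g y)]) ->
  open ((from_subspace A g) @^-1` B : set (subspace A)).
Proof.
move=> H; apply/open_subspaceP.
exists (\bigcup_(U in [set U | open U /\ forall y, U y -> A y -> B (g y)]) U).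
  by apply: bigcup_open => U [].
rewrite eqEsubset; split=> y [].
  by move=> [U [_ UV] Uy] Ay; split=> //; exact: UV.
move=> Vfy Ay; split=> //.
have [U [oU Uy UV]] := H y Ay Vfy.
by exists U.
Qed.

Lemma Qcw_sub (X Ct : topologicalType) (Dt : pgdata X Ct) (T : topologicalType)
  (A : set T) (g : T -> Qt Dt) :
  (forall B, subb Dt B -> forall x, A x -> B (g x) ->
     exists U, [/\ open U, U x & forall y, U y -> A y -> B (g y)]) -> cw A g.
Proof.
move=> H; apply/cwP; apply: Qcont_crit => B sB.
exact: pre_open_sub (H B sB).
Qed.

Lemma Qcw_crit (X Ct : topologicalType) (Dt : pgdata X Ct) (T : topologicalType)
  (A : set T) (g : T -> Qt Dt) :
  cw A (fun t => src Dt (qrep (g t))) -> cw A (fun t => tgt Dt (qrep (g t))) ->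
  (forall (G : topologicalType) (mul : G -> G -> G) (one : G) (inv : G -> G)
     (E : topologicalType) (p : E -> X) (act : E -> G -> E) (wt : Ct -> E -> E)
     (U : set X) (s : X -> E),
     isrep Dt mul one inv p act wt -> open U -> cw U s ->
     (forall x, U x -> p (s x) = x) ->
     cw [set t | A t /\ U (src Dt (qrep (g t)))] (fun t => psi wt s (g t))) ->
  cw A g.
Proof.
move=> cs ct cp; apply: Qcw_sub => B [[Oo oO ->]|[[Oo oO ->]|HB]].
- by move=> x Ax H; exact: cs x Ax Oo oO H.
- by move=> x Ax H; exact: ct x Ax Oo oO H.
move=> x Ax Bgx.
case: HB => G [mul [one [inv [E [p [act [wt [U [s [Oo [R oU cs' ps [oO eB]]]]]]]]]]]].
rewrite eB in Bgx *; case: Bgx => Ux Ox.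
have [W1 [oW1 W1x H1]] := cs x Ax U oU Ux.
have [W2 [oW2 W2x H2]] := cp _ _ _ _ _ _ _ _ _ _ R oU cs' ps x (conj Ax Ux) Oo oO Ox.
exists (W1 `&` W2); split=> //; first exact: openI.
move=> y [W1y W2y] Ay; have Uy := H1 y W1y Ay; split=> //.
exact: H2.
Qed.


Lemma cw_open_preim {T S : topologicalType} (D : set T) (h : T -> S) (V : set S) :
  open D -> cw D h -> open V -> open (D `&` h @^-1` V).
Proof.
move=> oD ch oV; rewrite openE => x [Dx Vhx].
have [U [oU Ux UV]] := ch x Dx V oV Vhx.
have : nbhs x (U `&` D) by apply: open_nbhs_nbhs; split => //; exact: openI.
by apply: filterS => y [Uy Dy]; split=> //; exact: UV.
Qed.

Lemma pb_p (X E G : topologicalType) (mul : G -> G -> G) (one : G) (p : E -> X)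
  (act : E -> G -> E) : principal_bundle mul one p act -> continuous p.
Proof. by case=> [[]]. Qed.

Lemma pb_act (X E G : topologicalType) (mul : G -> G -> G) (one : G) (p : E -> X)
  (act : E -> G -> E) (T : topologicalType) (A : set T) (a : T -> E) (b : T -> G) :
  principal_bundle mul one p act -> cw A a -> cw A b -> cw A (fun t => act (a t) (b t)).
Proof.
case=> [[_ ca]] _ _ _ _ H1 H2.
apply: (@cw_comp _ _ _ A setT (fun t => (a t, b t)) (fun zg => act zg.1 zg.2)) => //.
  exact: cw_pair.
exact: cw_cts.
Qed.

Lemma pb_actp (X E G : topologicalType) (mul : G -> G -> G) (one : G) (p : E -> X)
  (act : E -> G -> E) : principal_bundle mul one p act ->
  forall z g, p (act z g) = p z.
Proof. by case. Qed.

Lemma pb_tau (X E G : topologicalType) (mul : G -> G -> G) (one : G) (p : E -> X)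
  (act : E -> G -> E) : principal_bundle mul one p act ->
  exists tau : E -> E -> G,
    cw [set zz : E * E | p zz.1 = p zz.2] (fun zz => tau zz.1 zz.2) /\
    forall z z', p z = p z' -> act z (tau z z') = z'.
Proof.
case=> _ _ _ [_ [tau [ct H]]] _; exists tau; split=> //.
exact/cwP.
Qed.

Lemma pb_sec (X E G : topologicalType) (mul : G -> G -> G) (one : G) (p : E -> X)
  (act : E -> G -> E) : principal_bundle mul one p act ->
  forall x, exists U (s : X -> E), [/\ open U, U x, cw U s &
     forall y, U y -> p (s y) = y].
Proof.
case=> _ _ _ _ H x; have [U [oU Ux [s [cs ps]]]] := H x.
by exists U, s; split=> //; apply/cwP.
Qed.

Lemma rep_cw (X C E G : topologicalType) (D : pgdata X C) (p : E -> X)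
  (act : E -> G -> E) w : is_representation D p act w ->
  cw [set cz : C * E | src D cz.1 = p cz.2] (fun cz => w cz.1 cz.2).
Proof. by case=> cw' _ _ _ _; apply/cwP. Qed.

Lemma rep_cw_comp (X C E G T : topologicalType) (D : pgdata X C) (p : E -> X)
  (act : E -> G -> E) w (A : set T) (a : T -> C) (b : T -> E) :
  is_representation D p act w -> cw A a -> cw A b ->
  (forall t, A t -> src D (a t) = p (b t)) -> cw A (fun t => w (a t) (b t)).
Proof.
move=> hw ca cb H.
apply: (@cw_comp _ _ _ A _ (fun t => (a t, b t)) (fun cz => w cz.1 cz.2)).
- exact: cw_pair.
- exact: rep_cw hw.
- exact: H.
Qed.

Lemma tau_cw_comp (X E G T : topologicalType) (p : E -> X) (tau : E -> E -> G)
  (A : set T) (a b : T -> E) :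
  cw [set zz : E * E | p zz.1 = p zz.2] (fun zz => tau zz.1 zz.2) ->
  cw A a -> cw A b -> (forall t, A t -> p (a t) = p (b t)) ->
  cw A (fun t => tau (a t) (b t)).
Proof.
move=> ct ca cb H.
apply: (@cw_comp _ _ _ A _ (fun t => (a t, b t)) (fun zz => tau zz.1 zz.2)).
- exact: cw_pair.
- exact: ct.
- exact: H.
Qed.

Lemma srcQ_cw (X Ct T : topologicalType) (Dt : pgdata X Ct) (A : set T)
  (g : T -> Qt Dt) : cw A g -> cw A (fun t => src (Dq Dt) (g t)).
Proof.
move=> cg; apply: (@cw_comp _ _ _ A setT g (fun y => src (Dq Dt) y) cg) => //.
apply: cw_cts; apply/continuousP => O oO.
by apply: subb_open; left; exists O.
Qed.

Lemma tgtQ_cw (X Ct T : topologicalType) (Dt : pgdata X Ct) (A : set T)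
  (g : T -> Qt Dt) : cw A g -> cw A (fun t => tgt (Dq Dt) (g t)).
Proof.
move=> cg; apply: (@cw_comp _ _ _ A setT g (fun y => tgt (Dq Dt) y) cg) => //.
apply: cw_cts; apply/continuousP => O oO.
by apply: subb_open; right; left; exists O.
Qed.

Lemma psi_cw (X Ct : topologicalType) (Dt : pgdata X Ct) (G : topologicalType)
  (mul : G -> G -> G) (one : G) (inv : G -> G) (E : topologicalType) (p : E -> X)
  (act : E -> G -> E) (wt : Ct -> E -> E) (U : set X) (s : X -> E) :
  isrep Dt mul one inv p act wt -> open U -> cw U s ->
  (forall x, U x -> p (s x) = x) ->
  cw [set y : Qt Dt | U (src Dt (qrep y))] (@psi _ _ Dt _ wt s).
Proof.
move=> R oU cs ps y Uy V oV Vy.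
exists [set y | U (src Dt (qrep y)) /\ V (psi wt s y)]; split=> //.
  apply: subb_open; right; right.
  by exists G, mul, one, inv, E, p, act, wt, U, s, V.
by move=> y' [].
Qed.

Lemma psi_qq (X Ct : topologicalType) (Dt : pgdata X Ct) (G : topologicalType)
  (mul : G -> G -> G) (one : G) (inv : G -> G) (E : topologicalType) (p : E -> X)
  (act : E -> G -> E) (wt : Ct -> E -> E) (U : set X) (s : X -> E) c :
  isrep Dt mul one inv p act wt -> (forall x, U x -> p (s x) = x) -> U (src Dt c) ->
  psi wt s (qq Dt c) = wt c (s (src Dt c)).
Proof.
move=> R ps Uc; rewrite /psi; have [e1 _ H] := qrepq Dt c.
by rewrite e1; apply: (H _ _ _ _ _ _ _ _ R); rewrite ps // e1.
Qed.

Lemma wQ_qq (X Ct : topologicalType) (Dt : pgdata X Ct) (G : topologicalType)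
  (mul : G -> G -> G) (one : G) (inv : G -> G) (E : topologicalType) (p : E -> X)
  (act : E -> G -> E) (wt : Ct -> E -> E) c z :
  isrep Dt mul one inv p act wt -> p z = src Dt c ->
  wt (qrep (qq Dt c)) z = wt c z.
Proof.
move=> R pz; have [e1 _ H] := qrepq Dt c.
by apply: (H _ _ _ _ _ _ _ _ R); rewrite e1.
Qed.

Lemma wQ_cw (X Ct : topologicalType) (Dt : pgdata X Ct) (G : topologicalType)
  (mul : G -> G -> G) (one : G) (inv : G -> G) (E : topologicalType) (p : E -> X)
  (act : E -> G -> E) (wt : Ct -> E -> E) :
  isrep Dt mul one inv p act wt ->
  cw [set yz : Qt Dt * E | src (Dq Dt) yz.1 = p yz.2] (fun yz => wt (qrep yz.1) yz.2).
Proof.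
move=> R; have R' := R; case: R' => hG tg pb hw.
have [wC wP wM wB wE] := hw.
have [tau [ctau ptau]] := pb_tau pb.
apply: cw_local => -[y0 z0] /= e0.
have [U [s [oU Uz cs ps]]] := pb_sec pb (p z0).
exists (setT `*` (p @^-1` U)); split=> //.
  apply: openX; first exact: openT.
  by move/continuousP: (pb_p pb); apply.
pose F (yz : Qt Dt * E) := act (@psi _ _ Dt _ wt s yz.1) (tau (s (p yz.2)) yz.2).
have eF : forall yz, ([set yz : Qt Dt * E | src (Dq Dt) yz.1 = p yz.2]
    `&` (setT `*` (p @^-1` U))) yz -> F yz = wt (qrep yz.1) yz.2.
  move=> [y z] /= [e [_ Uz']].
  rewrite /F /psi /=; rewrite [in RHS]/= in e *.
  have e' : src Dt (qrep y) = p z by exact: e.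
  rewrite e' -wE; first by rewrite ptau // ps.
  by rewrite ps.
apply: (cw_ext eF); rewrite /F.
apply: (pb_act pb).
  apply: (@cw_comp _ _ _ _ [set y | U (src Dt (qrep y))] fst); first exact: cw_fst.
    exact: psi_cw R oU cs ps.
  by move=> [y z] /= [e [_ Uz']]; rewrite /= in e; rewrite e.
apply: (tau_cw_comp ctau); last by move=> [y z] /= [_ [_ Uz']]; rewrite ps.
  apply: (@cw_comp _ _ _ _ U (fun yz : Qt Dt * E => p yz.2)) => //.
    apply: (@cw_comp _ _ _ _ setT snd p); [exact: cw_snd|exact: cw_cts (pb_p pb)|by []].
  by move=> [y z] [_ [_ Uz']].
exact: cw_snd.
Qed.

Lemma qq_cont (X Ct : topologicalType) (Dt : pgdata X Ct) :
  is_pregroupoid Dt -> continuous (qq Dt).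
Proof.
move=> hD; have hD' := hD; case: hD' => -[cS cT cC cU cB] _.
apply: cw_setT; apply: Qcw_crit.
- apply: (cw_ext (f := src Dt)); last exact: cw_cts.
  by move=> c _; symmetry; exact: src_qq.
- apply: (cw_ext (f := tgt Dt)); last exact: cw_cts.
  by move=> c _; symmetry; exact: tgt_qq.
move=> G mul one inv E p act wt U s R oU cs ps.
have hw : is_representation Dt p act wt by case: R.
apply: (cw_ext (f := fun c => wt c (s (src Dt c)))).
  move=> c [_ Uc]; symmetry; apply: psi_qq R ps _.
  by move: Uc; rewrite -[src Dt (qrep _)]/(src (Dq Dt) (qq Dt c)) src_qq.
apply: (rep_cw_comp hw); first exact: cw_id.
  apply: (@cw_comp _ _ _ _ U (src Dt) s) => //; first exact: cw_cts.
  by move=> c [_ Uc]; move: Uc; rewrite -[src Dt (qrep _)]/(src (Dq Dt) (qq Dt c)) src_qq.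
move=> c [_ Uc]; move: Uc; rewrite -[src Dt (qrep _)]/(src (Dq Dt) (qq Dt c)) src_qq.
by move=> Uc; rewrite ps.
Qed.

Lemma cmpQ_cw (X Ct : topologicalType) (Dt : pgdata X Ct) :
  is_pregroupoid Dt ->
  cw [set yy : Qt Dt * Qt Dt | src (Dq Dt) yy.1 = tgt (Dq Dt) yy.2]
     (fun yy => cmp (Dq Dt) yy.1 yy.2).
Proof.
move=> hD; have hD' := hD; case: hD' => -[cS cT cC cU cB] [sC aC sU uC _].
have srcE : forall y1 y2 : Qt Dt, src Dt (qrep y1) = tgt Dt (qrep y2) ->
    src Dt (qrep (qq Dt (cmp Dt (qrep y1) (qrep y2)))) = src Dt (qrep y2).
  move=> y1 y2 e.
  rewrite -[src Dt (qrep _)]/(src (Dq Dt) (qq Dt _)) src_qq.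
  exact: (sC _ _ e).1.
have tgtE : forall y1 y2 : Qt Dt, src Dt (qrep y1) = tgt Dt (qrep y2) ->
    tgt Dt (qrep (qq Dt (cmp Dt (qrep y1) (qrep y2)))) = tgt Dt (qrep y1).
  move=> y1 y2 e.
  rewrite -[tgt Dt (qrep _)]/(tgt (Dq Dt) (qq Dt _)) tgt_qq.
  exact: (sC _ _ e).2.
apply: Qcw_crit.
- apply: (cw_ext (f := fun yy : Qt Dt * Qt Dt => src (Dq Dt) yy.2)).
    by move=> [y1 y2] /= e; rewrite srcE.
  by apply: srcQ_cw; exact: cw_snd.
- apply: (cw_ext (f := fun yy : Qt Dt * Qt Dt => tgt (Dq Dt) yy.1)).
    by move=> [y1 y2] /= e; rewrite tgtE.
  by apply: tgtQ_cw; exact: cw_fst.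
move=> G mul one inv E p act wt U s R oU cs ps.
have hw : is_representation Dt p act wt by case: R.
have [wC wP wM wB wE] := hw.
apply: (cw_ext (f := fun yy : Qt Dt * Qt Dt => wt (qrep yy.1) (psi wt s yy.2))).
  move=> [y1 y2] /= [e Uc]; rewrite srcE // in Uc.
  rewrite /psi /= srcE // (wQ_qq R); last by rewrite ps // (sC _ _ e).1.
  by rewrite wM // ps.
apply: (@cw_comp _ _ _ _ [set yz : Qt Dt * E | src (Dq Dt) yz.1 = p yz.2]
  (fun yy : Qt Dt * Qt Dt => (yy.1, psi wt s yy.2))
  (fun yz => wt (qrep yz.1) yz.2)).
- apply: cw_pair; first exact: cw_fst.
  apply: (@cw_comp _ _ _ _ [set y : Qt Dt | U (src Dt (qrep y))] snd).
  + exact: cw_snd.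
  + exact: psi_cw R oU cs ps.
  + by move=> [y1 y2] /= [e Uc]; rewrite srcE // in Uc.
- exact: wQ_cw R.
- move=> [y1 y2] /= [e Uc]; rewrite srcE // in Uc.
  rewrite /psi wP ?ps //.
Qed.

Lemma barQ_cw (X Ct : topologicalType) (Dt : pgdata X Ct) :
  is_pregroupoid Dt -> cw setT (bar (Dq Dt)).
Proof.
move=> hD; have hD' := hD; case: hD' => -[cS cT cC cU cB] [sC aC sU uC [bb sB bC]].
have srcE : forall y : Qt Dt, src Dt (qrep (qq Dt (bar Dt (qrep y)))) = tgt Dt (qrep y).
  move=> y; rewrite -[src Dt (qrep _)]/(src (Dq Dt) (qq Dt _)) src_qq.
  exact: (sB _).1.
have tgtE : forall y : Qt Dt, tgt Dt (qrep (qq Dt (bar Dt (qrep y)))) = src Dt (qrep y).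
  move=> y; rewrite -[tgt Dt (qrep _)]/(tgt (Dq Dt) (qq Dt _)) tgt_qq.
  exact: (sB _).2.
apply: Qcw_crit.
- apply: (cw_ext (f := fun y : Qt Dt => tgt (Dq Dt) y)).
    by move=> y _; rewrite /= srcE.
  by apply: tgtQ_cw; exact: cw_id.
- apply: (cw_ext (f := fun y : Qt Dt => src (Dq Dt) y)).
    by move=> y _; rewrite /= tgtE.
  by apply: srcQ_cw; exact: cw_id.
move=> G mul one inv E p act wt U s R oU cs ps.
have R' := R; case: R' => hG tg pb hw.
have [wC wP wM wB wE] := hw.
have [tau [ctau ptau]] := pb_tau pb.
apply: cw_local => y0 _.
have [U' [s' [oU' U'y cs' ps']]] := pb_sec pb (src Dt (qrep y0)).
exists [set y : Qt Dt | U' (src Dt (qrep y))]; split=> //.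
  by apply: subb_open; left; exists U'.
pose F (y : Qt Dt) := act (s' (src Dt (qrep y)))
   (tau (psi wt s' y) (s (tgt Dt (qrep y)))).
apply: (cw_ext (f := F)).
  move=> y [[_ Uy] U'y']; rewrite /= srcE in Uy.
  rewrite /F /= (psi_qq R ps); last by rewrite (sB _).1.
  rewrite (sB _).1.
  have h1 : s (tgt Dt (qrep y)) = act (psi wt s' y) (tau (psi wt s' y) (s (tgt Dt (qrep y)))).
    by rewrite ptau // ps // /psi wP // ps'.
  rewrite {2}h1 wE; last by rewrite (sB _).1 /psi wP // ps'.
  by rewrite /psi wB // ps'.
rewrite /F; apply: (pb_act pb).
  apply: (@cw_comp _ _ _ _ U' (fun y : Qt Dt => src Dt (qrep y)) s') => //.
    by apply: srcQ_cw; exact: cw_id.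
  by move=> y [].
apply: (tau_cw_comp ctau).
- apply: (@cw_sub _ _ [set y : Qt Dt | U' (src Dt (qrep y))]).
    by move=> y [].
  exact: psi_cw R oU' cs' ps'.
- apply: (@cw_comp _ _ _ _ U (fun y : Qt Dt => tgt Dt (qrep y)) s) => //.
    by apply: tgtQ_cw; exact: cw_id.
  by move=> y [[_ Uy] _]; rewrite /= srcE in Uy.
- move=> y [[_ Uy] U'y']; rewrite /= srcE in Uy.
  by rewrite /psi wP ?ps' // ps.
Qed.

Lemma untQ_cw (X Ct : topologicalType) (Dt : pgdata X Ct) :
  is_pregroupoid Dt -> cw setT (unt (Dq Dt)).
Proof.
move=> hD; have hD' := hD; case: hD' => -[cS cT cC cU cB] [sC aC sU uC [bb sB bC]].
have srcE : forall x, src Dt (qrep (qq Dt (unt Dt x))) = x.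
  move=> x; rewrite -[src Dt (qrep _)]/(src (Dq Dt) (qq Dt _)) src_qq.
  exact: (sU _).1.
have tgtE : forall x, tgt Dt (qrep (qq Dt (unt Dt x))) = x.
  move=> x; rewrite -[tgt Dt (qrep _)]/(tgt (Dq Dt) (qq Dt _)) tgt_qq.
  exact: (sU _).2.
apply: Qcw_crit.
- by apply: (cw_ext (f := id)) => [x _|]; [rewrite /= srcE|exact: cw_id].
- by apply: (cw_ext (f := id)) => [x _|]; [rewrite /= tgtE|exact: cw_id].
move=> G mul one inv E p act wt U s R oU cs ps.
have R' := R; case: R' => hG tg pb hw.
apply: (cw_ext (f := s)).
  move=> x [_ Ux]; rewrite /= srcE in Ux.
  rewrite /= (psi_qq R ps); last by rewrite (sU _).1.
  rewrite (sU _).1.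
  have := rep_unt hD hw (s x); rewrite ps //.
by apply: (cw_sub (A := U)) => // x [_]; rewrite /= srcE.
Qed.

Lemma Q_hausdorff (X Ct : topologicalType) (Dt : pgdata X Ct) :
  hausdorff_space X -> is_pregroupoid Dt -> hausdorff_space (Qt Dt).
Proof.
move=> hX hD; apply: hausdorffI => y1 y2 ne.
have srcO : forall O, open O -> open [set y : Qt Dt | O (src Dt (qrep y))].
  by move=> O oO; apply: subb_open; left; exists O.
have tgtO : forall O, open O -> open [set y : Qt Dt | O (tgt Dt (qrep y))].
  by move=> O oO; apply: subb_open; right; left; exists O.
have [es|ns] := pselect (src Dt (qrep y1) = src Dt (qrep y2)); last first.
  have [U [V [oU oV Ux Vy UV]]] := hausdorffP hX ns.
  exists [set y : Qt Dt | U (src Dt (qrep y))], [set y : Qt Dt | V (src Dt (qrep y))].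
  by split; [exact: srcO|exact: srcO| | |move=> z; exact: UV].
have [et|nt] := pselect (tgt Dt (qrep y1) = tgt Dt (qrep y2)); last first.
  have [U [V [oU oV Ux Vy UV]]] := hausdorffP hX nt.
  exists [set y : Qt Dt | U (tgt Dt (qrep y))], [set y : Qt Dt | V (tgt Dt (qrep y))].
  by split; [exact: tgtO|exact: tgtO| | |move=> z; exact: UV].
have nq : ~ qrel Dt (qrep y1) (qrep y2).
  by move=> q; apply: ne; rewrite -(qqK y1) -(qqK y2); apply: qq_eq.
have [W|nW] := pselect (exists (G : topologicalType) (mul : G -> G -> G) (one : G)
   (inv : G -> G) (E : topologicalType) (p : E -> X) (act : E -> G -> E)
   (wt : Ct -> E -> E), isrep Dt mul one inv p act wt /\
   exists z, p z = src Dt (qrep y1) /\ wt (qrep y1) z <> wt (qrep y2) z); last first.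
  exfalso; apply: nq; split=> // G mul one inv E p act wt R z pz.
  apply: contrapT => nwt; apply: nW.
  by exists G, mul, one, inv, E, p, act, wt; split=> //; exists z.
case: W => G [mul [one [inv [E [p [act [wt [R [z [pz nwt]]]]]]]]]].
have R' := R; case: R' => hG tg pb hw.
have [wC wP wM wB wE] := hw.
have [tau [ctau ptau]] := pb_tau pb.
have [U [s [oU Ux cs ps]]] := pb_sec pb (src Dt (qrep y1)).
have [U2 [s2 [oU2 U2x cs2 ps2]]] := pb_sec pb (tgt Dt (qrep y1)).
pose phi (y : Qt Dt) := tau (s2 (tgt Dt (qrep y))) (psi wt s y).
pose Dm := [set y : Qt Dt | U (src Dt (qrep y))] `&` [set y | U2 (tgt Dt (qrep y))].
have oDm : open Dm by apply: openI; [exact: srcO|exact: tgtO].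
have cphi : cw Dm phi.
  apply: (tau_cw_comp ctau).
  - apply: (@cw_comp _ _ _ _ U2 (fun y : Qt Dt => tgt Dt (qrep y)) s2) => //.
      by apply: tgtQ_cw; exact: cw_id.
    by move=> y [].
  - apply: (@cw_sub _ _ [set y : Qt Dt | U (src Dt (qrep y))]).
      by move=> y [].
    exact: psi_cw R oU cs ps.
  - by move=> y [Uy U2y]; rewrite ps2 // /psi wP ?ps.
have epsi : forall y : Qt Dt, Dm y ->
    psi wt s y = act (s2 (tgt Dt (qrep y))) (phi y).
  by move=> y [Uy U2y]; rewrite /phi ptau // ps2 // /psi wP ?ps.
have g0 := tau (s (src Dt (qrep y1))) z.
have ez : z = act (s (src Dt (qrep y1))) (tau (s (src Dt (qrep y1))) z) by rewrite ptau // ps.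
have Dy1 : Dm y1 by split.
have Dy2 : Dm y2 by split => /=; [rewrite -es|rewrite -et].
have e1 : forall y : Qt Dt, src Dt (qrep y) = src Dt (qrep y1) ->
    wt (qrep y) z = act (psi wt s y) (tau (s (src Dt (qrep y1))) z).
  move=> y ey; rewrite {1}ez wE; last by rewrite ps // ey.
  by rewrite /psi ey.
have nphi : phi y1 <> phi y2.
  move=> e; apply: nwt; rewrite (e1 y1 erefl) (e1 y2 (esym es)); congr act.
  by rewrite !epsi // e et.
have [Oa [Ob [oOa oOb Oay Oby Oa2]]] := hausdorffP hG nphi.
exists (Dm `&` phi @^-1` Oa), (Dm `&` phi @^-1` Ob); split.
- exact: cw_open_preim.
- exact: cw_open_preim.
- by split.
- by split.
- by move=> y [_ ?] [_ ?]; exact: (Oa2 (phi y)).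
Qed.

Lemma numerable_mono (X : topologicalType) (P P' : set X -> Prop) :
  numerable_subordinate P -> (forall U, P U -> P' U) -> numerable_subordinate P'.
Proof.
move=> [J [phi [a b c d e]]] H; exists J, phi; split=> // j.
by have [U PU sU] := e j; exists U => //; apply: H.
Qed.

Lemma exist_part (X : topologicalType) (x0 : X) (Ct : topologicalType)
  (Dt : pgdata X Ct) :
  hausdorff_space X -> is_pregroupoid Dt -> locally_trivial_numerable x0 Dt ->
  good_quotient x0 Dt (Dq Dt) (qq Dt).
Proof.
move=> hX hD hL.
have hD' := hD; case: hD' => -[cS cT cC cU cB] [sC aC sU uC [bb sB bC]].
have [alg inv] := Dq_alg hD.
have cq := qq_cont hD.
split.
- split; first exact: Q_hausdorff.
  split=> //; split=> //; split.
  + by apply: cw_setT; apply: srcQ_cw; exact: cw_id.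
  + by apply: cw_setT; apply: tgtQ_cw; exact: cw_id.
  + by apply/cwP; exact: cmpQ_cw.
  + by apply: cw_setT; exact: untQ_cw.
  + by apply: cw_setT; exact: barQ_cw.
- apply: (numerable_mono hL) => U [oU [rho [crho prho]]].
  split=> //; exists (fun x => qq Dt (rho x)); split.
    apply/cwP; apply: (@cw_comp _ _ _ U setT rho (qq Dt)) => //.
      exact/cwP.
    exact: cw_cts.
  by move=> x Ux; rewrite src_qq tgt_qq; exact: prho.
- by split=> // y; exists (qrep y); exact: qqK.
- split.
  + by move=> c; rewrite src_qq tgt_qq.
  + by move=> c d e; rewrite cmp_qq.
  + by [].
  + by move=> c; rewrite bar_qq.
move=> G mul one inv' hG tg E p act pb wt hw.
have R : isrep Dt mul one inv' p act wt by split.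
have [wC wP wM wB wE] := hw.
exists (fun y z => wt (qrep y) z); split.
- split.
  + by apply/cwP; exact: wQ_cw R.
  + by move=> y z e; apply: wP.
  + move=> y1 y2 z e1 e2.
    change (wt (qrep (qq Dt (cmp Dt (qrep y1) (qrep y2)))) z =
            wt (qrep y1) (wt (qrep y2) z)).
    rewrite (wQ_qq R); first by rewrite wM.
    by rewrite (sC _ _ e1).1.
  + move=> y z e.
    change (wt (qrep (qq Dt (bar Dt (qrep y)))) (wt (qrep y) z) = z).
    rewrite (wQ_qq R); first by rewrite wB.
    by rewrite wP // (sB _).1.
  + by move=> y z g e; apply: wE.
- by move=> c z e; rewrite (wQ_qq R).
move=> w' hw' ind y z e.
have := ind (qrep y) z e; rewrite qqK => <-.
by [].
Qed.

Lemma val_ins (T : Type) (A : set T) (u0 : set_type A) x :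
  A x -> val (insubd u0 x) = x.
Proof. by move=> Ax; rewrite val_insubd (mem_set Ax). Qed.

Lemma valA (T : Type) (A : set T) (u : set_type A) : A (val u).
Proof. exact: set_mem (valP u). Qed.

Lemma cw_val (T S : topologicalType) (A : set S) (D : set T) (h : T -> set_type A) :
  cw D h -> cw D (fun t => val (h t)).
Proof.
move=> ch x Dx V oV Vx.
have oW : open (val @^-1` V : set (set_type A)) by exists V.
have [U [oU Ux UV]] := ch x Dx _ oW Vx.
by exists U; split=> // y Uy Dy; exact: UV.
Qed.

Lemma cw_ins (T S : topologicalType) (A : set S) (D : set T) (h : T -> set_type A) :
  cw D (fun t => val (h t)) -> cw D h.
Proof.
move=> ch x Dx W [V oV eW] Wx.
rewrite -eW in Wx.
have [U [oU Ux UV]] := ch x Dx V oV Wx.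
by exists U; split=> // y Uy Dy; rewrite -eW; exact: UV.
Qed.

Lemma settype_hausdorff (S : topologicalType) (A : set S) :
  hausdorff_space S -> hausdorff_space (set_type A).
Proof.
move=> hS; apply: hausdorffI => a b ne.
have ne' : val a <> val b by move=> e; apply: ne; exact: val_inj.
have [U [V [oU oV Ua Vb UV]]] := hausdorffP hS ne'.
exists (val @^-1` U), (val @^-1` V); split => //.
- by exists U.
- by exists V.
- by move=> z; apply: UV.
Qed.

Lemma numerable_cover (X : topologicalType) (P : set X -> Prop) :
  numerable_subordinate P -> forall x, exists U, P U /\ U x.
Proof.
move=> [J [phi [a b c d e]]] x.
have [j nj] : exists j, phi j x != Rdefinitions.IZR BinNums.Z0.
  apply: contrapT => nex.
  have := d x; rewrite fsbig1; last by move=> i /= ni; exfalso; apply: nex; exists i.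
  by move/eqP; rewrite eq_sym GRing.oner_eq0.
have [U PU sU] := e j; exists U; split=> //.
by apply: sU; apply: subset_closure.
Qed.

Lemma uniq_map (X : topologicalType) (x0 : X) (Ct : topologicalType)
  (Dt : pgdata X Ct) (C : topologicalType) (D : pgdata X C) (f : Ct -> C)
  (C' : topologicalType) (D' : pgdata X C') (f' : Ct -> C') :
  good_quotient x0 Dt D f -> good_quotient x0 Dt D' f' ->
  exists h : C -> C', [/\ continuous h, is_morphism D D' h & forall c, h (f c) = f' c].
Proof.
move=> [[hC [pgD ivD]] lt [cf sf] mf rf] [[hC' [pg' iv']] lt' [cf' sf'] mf' _].
have [[cS' cT' cC' cU' cB'] [sC' aC' sU' uC' [bb' sB' bC']]] := pg'.
have [[cS cT cC cU cB] _] := pgD.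
have [mfs' mfc' mfu' mfb'] := mf'.
have [mfs mfc mfu mfb] := mf.
have cov := numerable_cover lt'.
pose AG := [set g : C' | src D' g = x0 /\ tgt D' g = x0].
pose AE := [set z : C' | src D' z = x0].
have AGu : AG (unt D' x0) by exact: sU'.
have AEu : AE (unt D' x0) by exact: (sU' x0).1.
pose g0 : set_type AG := exist _ (unt D' x0) (mem_set AGu).
pose e0 : set_type AE := exist _ (unt D' x0) (mem_set AEu).
pose mulG (a b : set_type AG) : set_type AG := insubd g0 (cmp D' (val a) (val b)).
pose oneG : set_type AG := g0.
pose invG (a : set_type AG) : set_type AG := insubd g0 (bar D' (val a)).
pose pE (z : set_type AE) : X := tgt D' (val z).
pose actE (z : set_type AE) (g : set_type AG) : set_type AE :=
  insubd e0 (cmp D' (val z) (val g)).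
pose wt (c : Ct) (z : set_type AE) : set_type AE := insubd z (cmp D' (f' c) (val z)).
pose tauE (z z' : set_type AE) : set_type AG := insubd g0 (cmp D' (bar D' (val z)) (val z')).
have vmul : forall a b, val (mulG a b) = cmp D' (val a) (val b).
  move=> a b; apply: val_ins; rewrite /AG /=; have [sa ta] := valA a; have [sb tb] := valA b.
  by have [-> ->] := sC' (val a) (val b) (etrans sa (esym tb)).
have vinv : forall a, val (invG a) = bar D' (val a).
  move=> a; apply: val_ins; rewrite /AG /=; have [sa ta] := valA a.
  by have [-> ->] := sB' (val a).
have vact : forall z g, val (actE z g) = cmp D' (val z) (val g).
  move=> z g; apply: val_ins; rewrite /AE /=; have sz := valA z; have [sg tg] := valA g.
  by have [-> _] := sC' (val z) (val g) (etrans sz (esym tg)).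
have vwt : forall c z, src Dt c = pE z -> val (wt c z) = cmp D' (f' c) (val z).
  move=> c z e; apply: val_ins; rewrite /AE /=; have sz := valA z.
  have e' : src D' (f' c) = tgt D' (val z) by rewrite (mfs' c).1.
  by have [-> _] := sC' _ _ e'.
have vtau : forall z z', pE z = pE z' -> val (tauE z z') = cmp D' (bar D' (val z)) (val z').
  move=> z z' e; apply: val_ins; rewrite /AG /=; have sz := valA z; have sz' := valA z'.
  have e' : src D' (bar D' (val z)) = tgt D' (val z') by rewrite (sB' _).1.
  by have [-> ->] := sC' _ _ e'; rewrite (sB' _).2.
have ccmp : cw [set p : C' * C' | src D' p.1 = tgt D' p.2] (fun p => cmp D' p.1 p.2).
  exact/cwP.
have cmp_cw : forall (T : topologicalType) (A : set T) (a b : T -> C'),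
    cw A a -> cw A b -> (forall t, A t -> src D' (a t) = tgt D' (b t)) ->
    cw A (fun t => cmp D' (a t) (b t)).
  move=> T A a b ca cb H.
  apply: (@cw_comp _ _ _ A _ (fun t => (a t, b t)) (fun p => cmp D' p.1 p.2)).
  - exact: cw_pair.
  - exact: ccmp.
  - exact: H.
have cbar : forall (T : topologicalType) (A : set T) (a : T -> C'),
    cw A a -> cw A (fun t => bar D' (a t)).
  move=> T A a ca; apply: (@cw_comp _ _ _ A setT a (bar D')) => //.
  exact: cw_cts.
have hG : hausdorff_space (set_type AG) by exact: settype_hausdorff.
have tg : is_topgroup mulG oneG invG.
  split.
  - move=> a b c; apply: val_inj; rewrite !vmul.
    have [sa ta] := valA a; have [sb tb] := valA b; have [sc tc] := valA c.
    by rewrite aC' // ?sa ?tb ?sb ?tc.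
  - move=> a; have [sa ta] := valA a; split; apply: val_inj; rewrite vmul /=.
      by rewrite -ta (uC' _).1.
    by rewrite -sa (uC' _).2.
  - move=> a; have [sa ta] := valA a; split; apply: val_inj; rewrite vmul vinv /=.
      by rewrite (iv' _).2 sa.
    by rewrite (iv' _).1 ta.
  - apply: cw_setT; apply: cw_ins.
    apply: (cw_ext (f := fun ab : set_type AG * set_type AG => cmp D' (val ab.1) (val ab.2))).
      by move=> ab _; rewrite vmul.
    apply: cmp_cw.
    + by apply: (@cw_val _ _ AG _ fst); exact: cw_fst.
    + by apply: (@cw_val _ _ AG _ snd); exact: cw_snd.
    + by move=> [a b] _ /=; rewrite (valA a).1 (valA b).2.
  - apply: cw_setT; apply: cw_ins.
    apply: (cw_ext (f := fun a : set_type AG => bar D' (val a))).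
      by move=> a _; rewrite vinv.
    by apply: cbar; apply: cw_val; exact: cw_id.
have sec : forall x, exists U (s : X -> set_type AE) (rho : X -> C'),
    [/\ open U, U x, cw U rho, (forall y, U y -> val (s y) = bar D' (rho y)) &
        (forall y, U y -> src D' (rho y) = y /\ tgt D' (rho y) = x0)].
  move=> x; have [U [[oU [rho [crho prho]]] Ux]] := cov x.
  exists U, (fun y => insubd e0 (bar D' (rho y))), rho; split=> //.
    exact/cwP.
  move=> y Uy; apply: val_ins; rewrite /AE /=.
  by rewrite (sB' _).1 (prho y Uy).2.
have sec_cw : forall U (s : X -> set_type AE) (rho : X -> C'), cw U rho ->
    (forall y, U y -> val (s y) = bar D' (rho y)) -> cw U s.
  move=> U s rho crho vs; apply: cw_ins.
  by apply: (cw_ext (f := fun y => bar D' (rho y))) => [y Uy|]; [rewrite vs|exact: cbar].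
have cval : forall (T : topologicalType) (A : set T) (B : set C') (a : T -> set_type B),
    cw A a -> cw A (fun t => val (a t)) := fun T A B a ca => cw_val ca.
have pb : principal_bundle mulG oneG pE actE.
  split.
  - split.
      apply: cw_setT; apply: (@cw_comp _ _ _ _ setT (fun z : set_type AE => val z) (tgt D')) => //.
        by apply: cval; exact: cw_id.
      exact: cw_cts.
    apply: cw_setT; apply: cw_ins.
    apply: (cw_ext (f := fun zg : set_type AE * set_type AG => cmp D' (val zg.1) (val zg.2))).
      by move=> zg _; rewrite vact.
    apply: cmp_cw.
    + by apply: (@cw_val _ _ AE _ fst); exact: cw_fst.
    + by apply: (@cw_val _ _ AG _ snd); exact: cw_snd.
    + by move=> [z g] _ /=; rewrite (valA z) (valA g).2.
  - split.
      move=> z; apply: val_inj; rewrite vact /= -(valA z).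
      exact: (uC' _).2.
    move=> z g h; apply: val_inj; rewrite !vact vmul.
    have sz := valA z; have [sg tg'] := valA g; have [sh th] := valA h.
    by rewrite aC' // ?sz ?tg' ?sg ?th.
  - move=> z g; rewrite /pE vact.
    have sz := valA z; have [sg tg'] := valA g.
    by have [_ ->] := sC' (val z) (val g) (etrans sz (esym tg')).
  - split.
      move=> z z' e; exists (tauE z z'); split.
        apply: val_inj; rewrite vact vtau //.
        have sz := valA z; have sz' := valA z'.
        have e2 : tgt D' (val z) = tgt D' (val z') := e.
        rewrite -aC'; last by rewrite (sB' _).1.
          by rewrite (iv' _).1 e2 (uC' _).1.
        by rewrite (sB' _).2.
      move=> g' eg; apply: val_inj; rewrite vtau // -eg vact.
      have sz := valA z; have [sg tg'] := valA g'.
      rewrite -aC'; last by rewrite sz.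
        by rewrite (iv' _).2 sz -tg' (uC' _).1.
      by rewrite (sB' _).1.
    exists tauE; split.
      apply/cwP; apply: cw_ins.
      apply: (cw_ext (f := fun zz : set_type AE * set_type AE =>
                  cmp D' (bar D' (val zz.1)) (val zz.2))).
        by move=> zz e; rewrite vtau.
      apply: cmp_cw.
      + apply: cbar; apply: (@cw_val _ _ AE _ fst); exact: cw_fst.
      + apply: (@cw_val _ _ AE _ snd); exact: cw_snd.
      + by move=> [z z'] /= e; rewrite (sB' _).1.
    move=> z z' e; apply: val_inj; rewrite vact vtau //.
    have sz := valA z; have sz' := valA z'.
    have e2 : tgt D' (val z) = tgt D' (val z') := e.
    rewrite -aC'; last by rewrite (sB' _).1.
      by rewrite (iv' _).1 e2 (uC' _).1.
    by rewrite (sB' _).2.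
  - move=> x; have [U [s [rho [oU Ux crho vs prho]]]] := sec x.
    exists U; split=> //; exists s; split.
      by apply/cwP; exact: sec_cw crho vs.
    by move=> y Uy; rewrite /pE vs // (sB' _).2 (prho y Uy).1.
have ptgt : forall z, pE z = tgt D' (val z) by [].
have hw : is_representation Dt pE actE wt.
  split.
  - apply/cwP; apply: cw_ins.
    apply: (cw_ext (f := fun cz : Ct * set_type AE => cmp D' (f' cz.1) (val cz.2))).
      by move=> [c z] /= e; rewrite vwt.
    apply: cmp_cw.
    + apply: (@cw_comp _ _ _ _ setT fst f') => //; [exact: cw_fst|exact: cw_cts].
    + apply: (@cw_val _ _ AE _ snd); exact: cw_snd.
    + by move=> [c z] /= e; rewrite (mfs' c).1.
  - move=> c z e; rewrite ptgt vwt //.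
    have e' : src D' (f' c) = tgt D' (val z) by rewrite (mfs' c).1.
    by have [_ ->] := sC' _ _ e'; rewrite (mfs' c).2.
  - move=> c d z e1 e2.
    have e1' : src D' (f' c) = tgt D' (f' d) by rewrite (mfs' c).1 (mfs' d).2.
    have e2' : src D' (f' d) = tgt D' (val z) by rewrite (mfs' d).1.
    have e3 : src Dt c = pE (wt d z).
      rewrite ptgt vwt //; have [_ ->] := sC' _ _ e2'; by rewrite (mfs' d).2.
    have e4 : src Dt (cmp Dt c d) = pE z.
      rewrite -(mfs' _).1 mfc' //; have [-> _] := sC' _ _ e1'; by rewrite (mfs' d).1.
    apply: val_inj; rewrite vwt // vwt // vwt // mfc' //.
    by rewrite aC'.
  - move=> c z e.
    have e' : src D' (f' c) = tgt D' (val z) by rewrite (mfs' c).1.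
    have e3 : src Dt (bar Dt c) = pE (wt c z).
      rewrite -(mfs' _).1 mfb' (sB' _).1 ptgt vwt //.
      by have [_ ->] := sC' _ _ e'.
    apply: val_inj; rewrite vwt // vwt // mfb'.
    rewrite -aC'; [|by rewrite (sB' _).1|by []].
    by rewrite (iv' _).2 e' (uC' _).1.
  - move=> c z g e.
    have e' : src D' (f' c) = tgt D' (val z) by rewrite (mfs' c).1.
    have sz := valA z; have [sg tg'] := valA g.
    have e3 : src Dt c = pE (actE z g).
      rewrite ptgt vact; have [_ ->] := sC' (val z) (val g) (etrans sz (esym tg')).
      exact: e.
    apply: val_inj; rewrite vwt // !vact vwt //.
    by rewrite aC' // sz tg'.
have [w [hw2 ind uq]] := rf (set_type AG) mulG oneG invG hG tg (set_type AE) pE actE pb wt hw.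
have key : forall c z, src Dt c = pE z -> val (w (f c) z) = cmp D' (f' c) (val z).
  by move=> c z e; rewrite -ind // vwt.
have zover : forall x, exists z : set_type AE, pE z = x.
  move=> x; have [U [s [rho [oU Ux crho vs prho]]]] := sec x.
  by exists (s x); rewrite ptgt vs // (sB' _).2 (prho x Ux).1.
have canc : forall a z, src D' a = tgt D' z -> src D' z = x0 ->
    cmp D' (cmp D' a z) (bar D' z) = a.
  move=> a z e sz; rewrite aC' //; last by rewrite (sB' _).2.
  by rewrite (iv' _).1 -e (uC' _).2.
have wd : forall c1 c2, f c1 = f c2 -> f' c1 = f' c2.
  move=> c1 c2 e.
  have [z pz] := zover (src Dt c1).
  have e2 : src Dt c2 = pE z by rewrite -(mfs c2).1 -e (mfs c1).1.
  have k1 := key c1 z (esym pz); have k2 := key c2 z e2.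
  rewrite e in k1; rewrite k1 in k2.
  have sz : src D' (val z) = x0 := valA z.
  have h1 : src D' (f' c1) = tgt D' (val z) by rewrite (mfs' c1).1.
  have h2 : src D' (f' c2) = tgt D' (val z) by rewrite (mfs' c2).1.
  by rewrite -(canc _ _ h1 sz) k2 (canc _ _ h2 sz).
pose crep (y : C) : Ct := projT1 (cid (sf y)).
have crepK : forall y, f (crep y) = y by move=> y; rewrite /crep; case: cid.
pose h (y : C) : C' := f' (crep y).
have hf : forall c, h (f c) = f' c by move=> c; apply: wd; rewrite crepK.
exists h; split=> //; last first.
  split.
  - by move=> y; rewrite -(crepK y) hf (mfs' _).1 (mfs' _).2 (mfs _).1 (mfs _).2.
  - move=> y1 y2; rewrite -(crepK y1) -(crepK y2) (mfs _).1 (mfs _).2 => e.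
    by rewrite -mfc // !hf mfc'.
  - by move=> x; rewrite -mfu hf mfu'.
  - by move=> y; rewrite -(crepK y) -mfb !hf mfb'.
apply: cw_setT; apply: cw_local => y0 _.
have [U [s [rho [oU Ux crho vs prho]]]] := sec (src D y0).
have ps : forall x, U x -> pE (s x) = x.
  by move=> x Ux'; rewrite ptgt vs // (sB' _).2 (prho x Ux').1.
exists (src D @^-1` U); split=> //.
  by move/continuousP: cS; apply.
apply: (cw_ext (f := fun y => cmp D' (val (w y (s (src D y)))) (rho (src D y)))).
  move=> y [_ Uy]; rewrite -(crepK y) in Uy *; rewrite hf.
  move: (crep y) Uy => c Uc0.
  have Uc : U (src Dt c) by rewrite -(mfs c).1.
  rewrite /= (mfs c).1 key; last by rewrite (ps _ Uc).
  rewrite vs //.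
  have [sr tr] := prho _ Uc.
  rewrite aC'; [|by rewrite (mfs' c).1 (sB' _).2 sr|by rewrite (sB' _).1].
  by rewrite (iv' _).2 sr -(mfs' c).1 (uC' _).2.
apply: cmp_cw.
- apply: (@cw_val _ _ AE _ (fun y => w y (s (src D y)))).
  apply: (rep_cw_comp hw2); first exact: cw_id.
    apply: (@cw_comp _ _ _ _ U (src D) s); [exact: cw_cts|exact: sec_cw crho vs|].
    by move=> y [].
  by move=> y [_ Uy]; rewrite ps.
- apply: (@cw_comp _ _ _ _ U (src D) rho); [exact: cw_cts|exact: crho|].
  by move=> y [].
- move=> y [_ Uy].
  have e : src D' (val (w y (s (src D y)))) = x0 := valA (w y (s (src D y))).
  by rewrite e (prho _ Uy).2.
Qed.

Theorem proposition6p2 (X : topologicalType) (x0 : X) (Ct : topologicalType)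
  (Dt : pgdata X Ct) :
  hausdorff_space X -> is_pregroupoid Dt -> locally_trivial_numerable x0 Dt ->
  exists (C : topologicalType) (D : pgdata X C) (f : Ct -> C),
    good_quotient x0 Dt D f /\
    forall (C' : topologicalType) (D' : pgdata X C') (f' : Ct -> C'),
      good_quotient x0 Dt D' f' ->
      exists (h : C -> C') (k : C' -> C),
        [/\ continuous h /\ continuous k, cancel h k, cancel k h,
            is_morphism D D' h & forall c, h (f c) = f' c].
Proof.
move=> hX hD hL.
have gq := exist_part hX hD hL.
exists (Qt Dt), (Dq Dt), (qq Dt); split=> // C' D' f' gq'.
have [h [ch mh hf]] := uniq_map gq gq'.
have [k [ck mk kf]] := uniq_map gq' gq.
exists h, k; split=> //.
- by move=> y; rewrite -(qqK y) hf kf.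
- move=> y'; case: gq' => _ _ [_ sf'] _ _.
  by have [c <-] := sf' y'; rewrite kf hf.
Qed.
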